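(* Let $(G,T)$ be a terminal graph that is the join of terminal graphs $(G_1,T)$ and $(G_2,T)$, and let $k$ be a positive integer. Let $(H_1,\ell_1)=\mathcal{C}^c_k(G_1,T)$ and $(H_2,\ell_2)=\mathcal{C}^c_k(G_2,T)$. Construct a labeled graph $(H,\ell)$ as follows: for every pair of nodes $x\in V(H_1)$, $y\in V(H_2)$ with $\ell_1(x)=\ell_2(y)$ introduce a node $(x,y)$ with $\ell((x,y))=\ell_1(x)$; add an edge between two distinct nodes $(x,y)$ and $(x',y')$ if and only if $xx'$ is an edge of $H_1$ and $yy'$ is an edge of $H_2$. Then $(H,\ell)=\mathcal{C}^c_k(G,T)$. Moreover, given certificates for $(H_1,\ell_1)$ and $(H_2,\ell_2)$, there is a certificate for $(H,\ell)$ such that for every $k$-coloring $\gamma$ of $G$, if $x$ is the $\gamma|_{V(G_1)}$-node of $H_1$ and $y$ is the $\gamma|_{V(G_2)}$-node of $H_2$, then $(x,y)$ is the $\gamma$-node of $H$.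
   Context: A terminal graph $(G,T)$ is a graph with $T\subseteq V(G)$. $(G,T)$ is the join of $(G_1,T)$ and $(G_2,T)$ if $G_1,G_2$ are induced subgraphs of $G$, $V(G_1)\cap V(G_2)=T$, $V(G_1)\cup V(G_2)=V(G)$, $V(G_1)\ne T$, $V(G_2)\ne T$, and every edge of $G$ lies in $G_1$ or $G_2$. A $k$-coloring of $G$ is a map $\alpha:V(G)\to\{1,\dots,k\}$ with $\alpha(u)\ne\alpha(w)$ for all edges $uw$. $\mathcal{C}_k(G)$ has the $k$-colorings as nodes, adjacent iff they differ on exactly one vertex. For $T\subseteq V(G)$, label each coloring $\gamma$ by $\gamma|_T$. A label component is a maximal set of colorings with the same label inducing a connected subgraph of $\mathcal{C}_k(G)$. The contracted solution graph $\mathcal{C}^c_k(G,T)=(H,\ell)$ has one node $x$ per label component $S_x$, distinct $x,y$ adjacent iff some $\gamma\in S_x,\gamma'\in S_y$ are adjacent in $\mathcal{C}_k(G)$, and $\ell(x)$ the common label on $S_x$; labeled graphs are identified up to label-preserving isomorphism. A certificate for $(H,\ell)$ is an assignment of nonempty sets $S_x$ of $k$-colorings of $G$ to the nodes such that: the $S_x$ partition the $k$-colorings; $\gamma|_T=\ell(x)$ for $\gamma\in S_x$; adjacent nodes have distinct labels; each $S_x$ induces a connected subgraph of $\mathcal{C}_k(G)$; distinct $x,y$ are adjacent iff some $\gamma\in S_x$ and $\gamma'\in S_y$ are adjacent in $\mathcal{C}_k(G)$. The $\gamma$-node with respect to a certificate $S$ is the node $x$ with $\gamma\in S_x$. *)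

(* Defs.v *)
From HB Require Import structures.
From mathcomp Require Import all_boot.
Set Implicit Arguments. Unset Strict Implicit. Unset Printing Implicit Defensive.

(* A finite simple graph is (V : finType, e : rel V) with e symmetric and
   irreflexive.  Induced subgraphs are given by vertex sets A : {set V}.
   A k-coloring of G[A] is encoded as a partial map V -> option 'I_k that is
   defined exactly on A and proper on the edges of G[A]. *)
Notation pcol V k := {ffun V -> option 'I_k}.

Section Defs.
Variables (V : finType) (e : rel V) (k : nat).

Definition is_coloring (A : {set V}) (f : pcol V k) : bool :=
  [forall v, (f v == None) == (v \notin A)] &&
  [forall u, forall w, [&& u \in A, w \in A & e u w] ==> (f u != f w)].

Definition col_adj (f g : pcol V k) : bool := #|[set v | f v != g v]| == 1.

Definition restr (B : {set V}) (f : pcol V k) : pcol V k :=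
  [ffun v => if v \in B then f v else None].

Definition connected_in (S : {set pcol V k}) : bool :=
  [forall f in S, forall g in S,
     connect (fun a b => [&& a \in S, b \in S & col_adj a b]) f g].

Definition label_comp_cand (T A : {set V}) (S : {set pcol V k}) : bool :=
  [&& S != set0, [forall f in S, is_coloring A f],
      [forall f in S, forall g in S, restr T f == restr T g]
    & connected_in S].

Definition label_comp (T A : {set V}) (S : {set pcol V k}) : bool :=
  maxset (label_comp_cand T A) S.

Definition comp_edge (S1 S2 : {set pcol V k}) : bool :=
  (S1 != S2) && [exists f in S1, exists g in S2, col_adj f g].

(* The labeled graph (N, E, l) is (up to label-preserving isomorphism)
   the contracted solution graph C^c_k(G[A], T). *)
Definition is_contraction (N : finType) (E : rel N) (l : N -> pcol V k)
    (T A : {set V}) : Prop :=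
  exists phi : N -> {set pcol V k},
    [/\ injective phi,
        (forall x, label_comp T A (phi x)),
        (forall S, label_comp T A S -> exists x, phi x = S),
        (forall x y, E x y = comp_edge (phi x) (phi y)) &
        (forall x f, f \in phi x -> restr T f = l x)].

Definition certificate (N : finType) (E : rel N) (l : N -> pcol V k)
    (T A : {set V}) (S : N -> {set pcol V k}) : Prop :=
  (forall x, S x != set0) /\
  (forall x f, f \in S x -> is_coloring A f) /\
  (forall f, is_coloring A f -> exists x, f \in S x) /\
  (forall x y f, f \in S x -> f \in S y -> x = y) /\
  (forall x f, f \in S x -> restr T f = l x) /\
  (forall x y, E x y -> l x != l y) /\
  (forall x, connected_in (S x)) /\
  (forall x y, x != y ->
     (E x y <-> exists f g, [/\ f \in S x, g \in S y & col_adj f g])).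

End Defs.

Definition is_join (V : finType) (e : rel V) (T A1 A2 : {set V}) : Prop :=
  [/\ A1 :&: A2 = T, A1 :|: A2 = setT, A1 != T, A2 != T &
      forall u v, e u v ->
        ((u \in A1) && (v \in A1)) || ((u \in A2) && (v \in A2))].

Definition lab_match (N1 N2 : finType) (L : Type) (l1 : N1 -> L) (l2 : N2 -> L)
  (eqL : L -> L -> bool) : pred (N1 * N2) := fun p => eqL (l1 p.1) (l2 p.2).

Definition prod_edge (N1 N2 : finType) (E1 : rel N1) (E2 : rel N2)
    (P : pred (N1 * N2)) : rel {p : N1 * N2 | P p} :=
  fun p q => [&& p != q, E1 (val p).1 (val q).1 & E2 (val p).2 (val q).2].

Definition prod_lab (N1 N2 : finType) (L : Type) (P : pred (N1 * N2))
  (l1 : N1 -> L) : {p : N1 * N2 | P p} -> L := fun p => l1 (val p).1.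

Arguments prod_edge {N1 N2} E1 E2 P _ _.
Arguments prod_lab {N1 N2 L} P l1 _.

(* Main.v *)
Require Import Defs.
From HB Require Import structures.
From mathcomp Require Import all_boot.
Set Implicit Arguments. Unset Strict Implicit. Unset Printing Implicit Defensive.

Section Gen.
Variables (V : finType) (e : rel V) (k : nat).
Implicit Types (f g : pcol V k) (S P Q : {set pcol V k}).

Definition dif f g : {set V} := [set v | f v != g v].

Lemma difC f g : dif f g = dif g f.
Proof. by apply/setP=> v; rewrite !inE eq_sym. Qed.

Lemma col_adjC f g : col_adj f g = col_adj g f.
Proof. by rewrite /col_adj -/(dif f g) -/(dif g f) difC. Qed.

Definition RS S := fun a b : pcol V k => [&& a \in S, b \in S & col_adj a b].

Lemma RS_sym S : symmetric (RS S).
Proof. by move=> a b; rewrite /RS col_adjC andbCA. Qed.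

Lemma RS_mono S P a b : S \subset P -> connect (RS S) a b -> connect (RS P) a b.
Proof.
move=> sSP; apply: connect_sub => x y /and3P[xS yS xy]; apply: connect1.
by rewrite /RS (subsetP sSP _ xS) (subsetP sSP _ yS).
Qed.

Lemma candP T A S :
  reflect [/\ S != set0, (forall f, f \in S -> is_coloring e A f),
     (forall f g, f \in S -> g \in S -> restr T f = restr T g) &
     (forall f g, f \in S -> g \in S -> connect (RS S) f g)]
  (label_comp_cand e T A S).
Proof.
apply: (iffP and4P) => [[H1 /forall_inP H2 H3 H4]|[H1 H2 H3 H4]]; split => //.
- by move=> f g fS gS; apply/eqP; move/forall_inP: H3 => /(_ f fS)/forall_inP/(_ g gS).
- by move=> f g fS gS; move/forall_inP: H4 => /(_ f fS)/forall_inP/(_ g gS).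
- by apply/forall_inP.
- by apply/forall_inP=> f fS; apply/forall_inP=> g gS; rewrite (H3 f g fS gS).
- by apply/forall_inP=> f fS; apply/forall_inP=> g gS; apply: H4.
Qed.

Lemma cand_union T A P Q f g : label_comp_cand e T A P -> label_comp_cand e T A Q ->
  f \in P -> g \in Q -> restr T f = restr T g -> (f = g \/ col_adj f g) ->
  label_comp_cand e T A (P :|: Q).
Proof.
move=> /candP[P0 Pc Pl Pk] /candP[Q0 Qc Ql Qk] fP gQ fg fgadj.
have sP : P \subset P :|: Q by apply: subsetUl.
have sQ : Q \subset P :|: Q by apply: subsetUr.
have lab a : a \in P :|: Q -> restr T a = restr T f.
  by rewrite inE => /orP[aP|aQ]; [apply: Pl | rewrite fg; apply: Ql].
have cf a : a \in P :|: Q -> connect (RS (P :|: Q)) f a.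
  rewrite inE => /orP[aP|aQ]; first by apply: RS_mono sP (Pk _ _ fP aP).
  apply: connect_trans (RS_mono sQ (Qk _ _ gQ aQ)).
  case: fgadj => [->//|fg1]; apply: connect1.
  by rewrite /RS fg1 (subsetP sP _ fP) (subsetP sQ _ gQ).
apply/candP; split.
- apply: contraNneq P0 => /setP H; apply/eqP/setP=> a.
  by move: (H a); rewrite !inE; case: (a \in P).
- by move=> a; rewrite inE => /orP[/Pc|/Qc].
- by move=> a b /lab -> /lab ->.
- move=> a b aU bU; apply: connect_trans (cf _ bU).
  by rewrite (sym_connect_sym (@RS_sym (P :|: Q))); apply: cf.
Qed.

Lemma comp_maxeq T A P Q f g : label_comp e T A P -> label_comp e T A Q ->
  f \in P -> g \in Q -> restr T f = restr T g -> (f = g \/ col_adj f g) -> P = Q.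
Proof.
move=> /maxsetP[Pc Pm] /maxsetP[Qc Qm] fP gQ fg adj.
have U := cand_union Pc Qc fP gQ fg adj.
rewrite -(Pm _ U (subsetUl _ _)).
by rewrite -{2}(Qm _ U (subsetUr _ _)).
Qed.

Lemma contr_cert (N : finType) (E : rel N) (l : N -> pcol V k) T A phi :
  injective phi -> (forall x, label_comp e T A (phi x)) ->
  (forall S, label_comp e T A S -> exists x, phi x = S) ->
  (forall x y, E x y = comp_edge (phi x) (phi y)) ->
  (forall x f, f \in phi x -> restr T f = l x) ->
  certificate e E l T A phi.
Proof.
move=> inj comp surj Eq lab.
have cand x := (maxsetP (comp x)).1.
split; [|split; [|split; [|split; [|split; [|split; [|split]]]]]].
- by move=> x; case/candP: (cand x).
- by move=> x; case/candP: (cand x).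
- move=> f fc.
  have c1 : label_comp_cand e T A [set f].
    apply/candP; split.
    + by apply/set0Pn; exists f; rewrite inE.
    + by move=> a; rewrite inE => /eqP->.
    + by move=> a b; rewrite !inE => /eqP-> /eqP->.
    + by move=> a b; rewrite !inE => /eqP-> /eqP->.
  case: (maxset_exists c1) => S Sm sub.
  case: (surj S Sm) => x phix; exists x; rewrite phix.
  by apply: (subsetP sub); rewrite inE.
- move=> x y f fx fy; apply: inj.
  by apply: (comp_maxeq (comp x) (comp y) fx fy); auto.
- exact: lab.
- move=> x y; rewrite Eq => /andP[ne /exists_inP[f fx /exists_inP[g gy fg]]].
  apply/negP => /eqP lxy; move/negP: ne; apply; apply/eqP.
  apply: (comp_maxeq (comp x) (comp y) fx gy); last by right.
  by rewrite (lab _ _ fx) (lab _ _ gy).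
- by move=> x; case/candP: (cand x) => _ _ _ H; apply/forall_inP=> f fS;
    apply/forall_inP=> g gS; apply: H.
- move=> x y nxy; rewrite Eq /comp_edge (inj_eq inj) nxy /=; split.
  + by move=> /exists_inP[f fx /exists_inP[g gy fg]]; exists f, g.
  + by move=> [f [g [fx gy fg]]]; apply/exists_inP; exists f => //; apply/exists_inP; exists g.
Qed.

Lemma cert_contr (N : finType) (E : rel N) (l : N -> pcol V k) T A (S : N -> {set pcol V k}) :
  certificate e E l T A S -> is_contraction e E l T A.
Proof.
move=> [C1 [C2 [C3 [C4 [C5 [C6 [C7 C8]]]]]]].
have inj : injective S.
  move=> x y Sxy; case/set0Pn: (C1 x) => f fx.
  by apply: (C4 _ _ f fx); rewrite -Sxy.
have cand x : label_comp_cand e T A (S x).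
  apply/candP; split => //.
  - by move=> f; apply: C2.
  - by move=> f g fx gx; rewrite (C5 _ _ fx) (C5 _ _ gx).
  - by move=> f g fx gx; move/forall_inP: (C7 x) => /(_ f fx)/forall_inP/(_ g gx).
have comp x : label_comp e T A (S x).
  apply/maxsetP; split => // S' S'c sub.
  case/candP: S'c => _ S'col S'lab S'con.
  case/set0Pn: (C1 x) => f fx.
  apply/eqP; rewrite eqEsubset sub andbT; apply/subsetP => g gS'.
  have fS' := subsetP sub _ fx.
  have cl : closed (RS S') (S x).
    move=> a b /and3P[aS bS ab].
    have key : forall a b, a \in S' -> b \in S' -> col_adj a b -> a \in S x -> b \in S x.
      move=> a' b' a'S b'S ab' a'x.
      case: (C3 _ (S'col _ b'S)) => y b'y.
      case: (eqVneq x y) => [->//|nxy].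
      have /C6 : E x y by apply/(C8 _ _ nxy); exists a', b'.
      by rewrite -(C5 _ _ a'x) -(C5 _ _ b'y) (S'lab _ _ a'S b'S) eqxx.
    apply/idP/idP; first exact: key.
    by apply: key; rewrite // col_adjC.
  by rewrite -(closed_connect cl (S'con _ _ fS' gS')).
exists S; split => //.
- move=> S0 S0c; have := S0c; move=> /maxsetP[/candP[n0 c0 _ _] _].
  case/set0Pn: n0 => f f0.
  case: (C3 _ (c0 _ f0)) => x fx; exists x.
  by apply: (comp_maxeq (comp x) S0c fx f0); auto.
- move=> x y; rewrite /comp_edge (inj_eq inj).
  case: (eqVneq x y) => [<-|nxy] /=.
    by apply/negP => /C6; rewrite eqxx.
  apply/idP/idP.
  + move=> /(C8 _ _ nxy)[f [g [fx gy fg]]].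
    by apply/exists_inP; exists f => //; apply/exists_inP; exists g.
  + move=> /exists_inP[f fx /exists_inP[g gy fg]].
    by apply/(C8 _ _ nxy); exists f, g.
Qed.

End Gen.

Section Join.
Variables (V : finType) (e : rel V) (k : nat).
Implicit Types (f g h a b : pcol V k).

Lemma restr_in (B : {set V}) f v : v \in B -> restr B f v = f v.
Proof. by move=> vB; rewrite /restr ffunE vB. Qed.
Lemma restr_out (B : {set V}) f v : v \notin B -> restr B f v = None.
Proof. by move=> vB; rewrite /restr ffunE (negbTE vB). Qed.

Lemma colP (A : {set V}) f : reflect
  ((forall v, (f v == None) = (v \notin A)) /\
   (forall u w, u \in A -> w \in A -> e u w -> f u != f w)) (is_coloring e A f).
Proof.
apply: (iffP andP) => [[/forallP H1 /forallP H2]|[H1 H2]]; split.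
- by move=> v; move: (H1 v) => /eqP.
- by move=> u w uA wA uw; move/forallP: (H2 u) => /(_ w); rewrite uA wA uw.
- by apply/forallP=> v; rewrite H1.
- apply/forallP=> u; apply/forallP=> w; apply/implyP=> /and3P[uA wA uw].
  exact: H2.
Qed.

Lemma col_out (A : {set V}) f v : is_coloring e A f -> v \notin A -> f v = None.
Proof. by case/colP=> H _ vA; apply/eqP; rewrite H. Qed.

Lemma restrTT (T A : {set V}) f : T \subset A -> restr T (restr A f) = restr T f.
Proof.
move=> sTA; apply/ffunP=> v; rewrite /restr !ffunE.
by case vT: (v \in T); rewrite // (subsetP sTA _ vT).
Qed.

Lemma restr_col (A : {set V}) f : is_coloring e setT f -> is_coloring e A (restr A f).
Proof.
case/colP=> H1 H2; apply/colP; split.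
- move=> v; rewrite /restr ffunE; case: (v \in A) => //=.
  by rewrite H1 inE.
- move=> u w uA wA uw; rewrite !restr_in //; apply: H2; rewrite ?inE //.
Qed.


Lemma dif0 f g : dif f g = set0 -> f = g.
Proof.
move=> H; apply/ffunP=> v; case: (eqVneq (f v) (g v)) => [//|ne].
have: v \in dif f g by rewrite inE ne.
by rewrite H inE.
Qed.

Lemma difT (T : {set V}) f g v : restr T f v != restr T g v -> v \in T /\ v \in dif f g.
Proof.
rewrite /restr !ffunE; case: (v \in T) => //.
by move=> ne; split => //; rewrite inE.
Qed.

Lemma adj_sub a b f g w : w \in dif a b -> dif a b \subset dif f g -> col_adj f g ->
  col_adj a b.
Proof.
move=> wab sub; rewrite /col_adj -/(dif f g) -/(dif a b) => /cards1P[v dv].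
move: (subsetP sub _ wab); rewrite dv inE => /eqP wv; subst w.
suff -> : dif a b = [set v] by rewrite cards1.
apply/eqP; rewrite eqEsubset -dv sub /=; apply/subsetP=> x; rewrite dv inE => /eqP->//.
Qed.

Lemma card_le1 a b f g : dif a b \subset dif f g -> col_adj f g -> #|dif a b| <= 1.
Proof. by move=> sub /eqP H; rewrite -H; apply: subset_leq_card. Qed.

Lemma cert_one (N : finType) (E : rel N) (l : N -> pcol V k) (T A : {set V})
   (S : N -> {set pcol V k}) x y f g :
  certificate e E l T A S -> f \in S x -> g \in S y -> restr T f = restr T g ->
  #|dif f g| <= 1 -> x = y.
Proof.
move=> [C1 [C2 [C3 [C4 [C5 [C6 [C7 C8]]]]]]] fx gy fg.
rewrite leq_eqVlt ltnS leqn0 => /orP[c1|/eqP/cards0_eq d0].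
  case: (eqVneq x y) => // nxy.
  have /C6 : E x y by apply/(C8 _ _ nxy); exists f, g.
  by rewrite -(C5 _ _ fx) -(C5 _ _ gy) fg eqxx.
by apply: (C4 _ _ f fx); rewrite (dif0 d0).
Qed.

Lemma lift_connect (X Y : finType) (r : rel X) (r' : rel Y) (F : X -> Y) (a b : X) :
  (forall a b : X, r a b -> r' (F a) (F b)) -> connect r a b -> connect r' (F a) (F b).
Proof.
move=> H /connectP[s pth ->]; elim: s a pth => [|c s IH] a //= /andP[rac pth].
exact: connect_trans (connect1 (H _ _ rac)) (IH _ pth).
Qed.

Definition gl (B : {set V}) h1 h2 : pcol V k := [ffun v => if v \in B then h1 v else h2 v].

Variables (T A1 A2 : {set V}).

Lemma gl_spec (B1 B2 : {set V}) h1 h2 :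
  B1 :&: B2 = T -> B1 :|: B2 = setT ->
  (forall v, v \notin B1 -> h1 v = None) -> (forall v, v \notin B2 -> h2 v = None) ->
  restr T h1 = restr T h2 ->
  restr B1 (gl B1 h1 h2) = h1 /\ restr B2 (gl B1 h1 h2) = h2.
Proof.
move=> I U o1 o2 lab; split; apply/ffunP=> v; rewrite /restr /gl !ffunE.
  by case vB: (v \in B1) => //; rewrite o1 // vB.
case vB2: (v \in B2); last by rewrite o2 // vB2.
case vB1: (v \in B1) => //.
have vT : v \in T by rewrite -I inE vB1 vB2.
by move/ffunP: lab => /(_ v); rewrite /restr !ffunE vT.
Qed.

Hypothesis I12 : A1 :&: A2 = T.
Hypothesis U12 : A1 :|: A2 = setT.
Hypothesis Ej : forall u v, e u v -> ((u \in A1) && (v \in A1)) || ((u \in A2) && (v \in A2)).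

Lemma TA1 : T \subset A1. Proof. by rewrite -I12 subsetIl. Qed.
Lemma TA2 : T \subset A2. Proof. by rewrite -I12 subsetIr. Qed.

Lemma inU v : (v \in A1) || (v \in A2).
Proof. by rewrite -in_setU U12 inE. Qed.

Lemma restr_ext f g : restr A1 f = restr A1 g -> restr A2 f = restr A2 g -> f = g.
Proof.
move=> /ffunP H1 /ffunP H2; apply/ffunP=> v.
case/orP: (inU v) => vA.
  by move: (H1 v); rewrite !restr_in.
by move: (H2 v); rewrite !restr_in.
Qed.

Lemma dif_split f g :
  dif f g = dif (restr A1 f) (restr A1 g) :|: dif (restr A2 f) (restr A2 g).
Proof.
apply/setP=> v; rewrite !inE /restr !ffunE.
case/orP: (inU v) => vA; rewrite vA /=.
  by case: (v \in A2); rewrite /= ?orbb ?orbF.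
by case: (v \in A1); rewrite /= ?orbb.
Qed.

Lemma col_glue f : is_coloring e A1 (restr A1 f) -> is_coloring e A2 (restr A2 f) ->
  is_coloring e setT f.
Proof.
move=> /colP[H1 H1'] /colP[H2 H2']; apply/colP; split.
- move=> v; rewrite inE /=; case/orP: (inU v) => vA.
    by move: (H1 v); rewrite restr_in // vA.
  by move: (H2 v); rewrite restr_in // vA.
- move=> u w _ _ uw; case/orP: (Ej uw) => /andP[uA wA].
    by move: (H1' _ _ uA wA uw); rewrite !restr_in.
  by move: (H2' _ _ uA wA uw); rewrite !restr_in.
Qed.

End Join.

Section Prod.
Variables (V : finType) (e : rel V) (k : nat) (T A1 A2 : {set V}).
Variables (N1 N2 : finType) (E1 : rel N1) (E2 : rel N2)
    (l1 : N1 -> pcol V k) (l2 : N2 -> pcol V k).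
Hypothesis I12 : A1 :&: A2 = T.
Hypothesis U12 : A1 :|: A2 = setT.
Hypothesis Ej : forall u v, e u v -> ((u \in A1) && (v \in A1)) || ((u \in A2) && (v \in A2)).
Variables (S1 : N1 -> {set pcol V k}) (S2 : N2 -> {set pcol V k}).
Hypothesis cert1 : certificate e E1 l1 T A1 S1.
Hypothesis cert2 : certificate e E2 l2 T A2 S2.

Let P := lab_match l1 l2 eq_op.
Let NP := {p : N1 * N2 | P p}.

Definition Sp (p : NP) : {set pcol V k} :=
  [set f | [&& is_coloring e setT f, restr A1 f \in S1 (val p).1 & restr A2 f \in S2 (val p).2]].

Lemma SpP (p : NP) f : reflect [/\ is_coloring e setT f, restr A1 f \in S1 (val p).1 &
   restr A2 f \in S2 (val p).2] (f \in Sp p).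
Proof. by rewrite inE; apply: and3P. Qed.

Lemma labP (p : NP) : l1 (val p).1 = l2 (val p).2.
Proof. by case: p => [[x y]] /= /eqP. Qed.

Lemma I21 : A2 :&: A1 = T. Proof. by rewrite setIC. Qed.
Lemma U21 : A2 :|: A1 = setT. Proof. by rewrite setUC. Qed.

Lemma glue_ex (x : N1) (y : N2) h1 h2 : h1 \in S1 x -> h2 \in S2 y -> l1 x = l2 y ->
  restr A1 (gl A1 h1 h2) = h1 /\ restr A2 (gl A1 h1 h2) = h2 /\
  restr A1 (gl A2 h2 h1) = h1 /\ restr A2 (gl A2 h2 h1) = h2 /\
  is_coloring e setT (gl A1 h1 h2).
Proof.
case: cert1 => [_ [C12 [_ [_ [C15 _]]]]]; case: cert2 => [_ [C22 [_ [_ [C25 _]]]]].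
move=> h1x h2y lxy.
have o1 : forall v, v \notin A1 -> h1 v = None by move=> v; apply: col_out (C12 _ _ h1x).
have o2 : forall v, v \notin A2 -> h2 v = None by move=> v; apply: col_out (C22 _ _ h2y).
have lab : restr T h1 = restr T h2 by rewrite (C15 _ _ h1x) (C25 _ _ h2y).
have [G1 G2] := gl_spec I12 U12 o1 o2 lab.
have [G3 G4] := gl_spec I21 U21 o2 o1 (esym lab).
do 4! (split => //).
apply: (col_glue U12 Ej); rewrite ?G1 ?G2; [exact: C12 h1x | exact: C22 h2y].
Qed.

Lemma prod_eq (p q : NP) : (val p).1 = (val q).1 -> (val p).2 = (val q).2 -> p = q.
Proof.
move=> h1 h2; apply: val_inj; move: h1 h2.
by case: (val p) => a b; case: (val q) => c d /= -> ->.
Qed.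

Lemma restr_restr f (x : N1) : restr A1 f \in S1 x -> restr T f = l1 x.
Proof.
case: cert1 => [_ [_ [_ [_ [C15 _]]]]] H.
by rewrite -(C15 _ _ H) restrTT // (TA1 I12).
Qed.

Lemma restr_restr2 f (y : N2) : restr A2 f \in S2 y -> restr T f = l2 y.
Proof.
case: cert2 => [_ [_ [_ [_ [C25 _]]]]] H.
by rewrite -(C25 _ _ H) restrTT // (TA2 I12).
Qed.

Lemma exists_diff (a b : pcol V k) : a != b -> exists w, a w != b w.
Proof.
move=> ne; apply/existsP; apply: contraR ne => /existsPn H.
by apply/eqP/ffunP=> w; move: (H w); rewrite negbK => /eqP.
Qed.

Lemma prod_cert : certificate e (prod_edge E1 E2 P) (prod_lab P l1) T setT Sp.
Proof.
have c1 := cert1; have c2 := cert2.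
case: cert1 => [C11 [C12 [C13 [C14 [C15 [C16 [C17 C18]]]]]]].
case: cert2 => [C21 [C22 [C23 [C24 [C25 [C26 [C27 C28]]]]]]].
split; [|split; [|split; [|split; [|split; [|split; [|split]]]]]].
- move=> p; case/set0Pn: (C11 (val p).1) => h1 h1x.
  case/set0Pn: (C21 (val p).2) => h2 h2y.
  have [G1 [G2 [_ [_ G5]]]] := glue_ex h1x h2y (labP p).
  by apply/set0Pn; exists (gl A1 h1 h2); apply/SpP; rewrite G1 G2.
- by move=> p f /SpP[].
- move=> f fc.
  case: (C13 _ (restr_col A1 fc)) => x fx.
  case: (C23 _ (restr_col A2 fc)) => y fy.
  have Pxy : P (x, y) by rewrite /P /lab_match /= -(restr_restr fx) -(restr_restr2 fy).
  by exists (exist _ (x, y) Pxy); apply/SpP.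
- move=> p q f /SpP[_ f1 f2] /SpP[_ g1 g2].
  by apply: prod_eq; [apply: (C14 _ _ _ f1 g1) | apply: (C24 _ _ _ f2 g2)].
- by move=> p f /SpP[_ f1 _]; rewrite (restr_restr f1).
- by move=> p q /and3P[_ /C16].
- move=> p; apply/forall_inP=> f /SpP[fc f1 f2]; apply/forall_inP=> g /SpP[gc g1 g2].
  move/forall_inP: (C17 (val p).1) => /(_ _ f1)/forall_inP/(_ _ g1) con1.
  move/forall_inP: (C27 (val p).2) => /(_ _ f2)/forall_inP/(_ _ g2) con2.
  pose F := fun h => gl A1 h (restr A2 f).
  pose G := fun h => gl A2 h (restr A1 g).
  have HF : forall a b, RS (S1 (val p).1) a b -> RS (Sp p) (F a) (F b).
    move=> a b /and3P[aS bS ab].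
    have [Fa1 [Fa2 [_ [_ Fac]]]] := glue_ex aS f2 (labP p).
    have [Fb1 [Fb2 [_ [_ Fbc]]]] := glue_ex bS f2 (labP p).
    apply/and3P; split; first by apply/SpP; rewrite /F Fa1 Fa2.
      by apply/SpP; rewrite /F Fb1 Fb2.
    rewrite /col_adj -/(dif (F a) (F b)) (dif_split U12) /F Fa1 Fa2 Fb1 Fb2.
    have -> : dif (restr A2 f) (restr A2 f) = set0.
      by apply/setP=> v; rewrite !inE eqxx.
    by rewrite setU0.
  have HG : forall a b, RS (S2 (val p).2) a b -> RS (Sp p) (G a) (G b).
    move=> a b /and3P[aS bS ab].
    have [_ [_ [Ga1 [Ga2 Gac]]]] := glue_ex g1 aS (labP p).
    have [_ [_ [Gb1 [Gb2 Gbc]]]] := glue_ex g1 bS (labP p).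
    have GaC : is_coloring e setT (G a).
      by apply: (col_glue U12 Ej); rewrite /G ?Ga1 ?Ga2; [apply: (C12 _ _ g1)|apply: (C22 _ _ aS)].
    have GbC : is_coloring e setT (G b).
      by apply: (col_glue U12 Ej); rewrite /G ?Gb1 ?Gb2; [apply: (C12 _ _ g1)|apply: (C22 _ _ bS)].
    apply/and3P; split; first by apply/SpP; rewrite /G Ga1 Ga2; split.
      by apply/SpP; rewrite /G Gb1 Gb2; split.
    rewrite /col_adj -/(dif (G a) (G b)) (dif_split U12) /G Ga1 Ga2 Gb1 Gb2.
    have -> : dif (restr A1 g) (restr A1 g) = set0.
      by apply/setP=> v; rewrite !inE eqxx.
    by rewrite set0U.
  have [Ff1 [Ff2 _]] := glue_ex f1 f2 (labP p).
  have [Fg1 [Fg2 [Gg1 [Gg2 _]]]] := glue_ex g1 f2 (labP p).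
  have [_ [_ [Gh1 [Gh2 _]]]] := glue_ex g1 g2 (labP p).
  have e1 : F (restr A1 f) = f by apply: (restr_ext U12); rewrite /F ?Ff1 ?Ff2.
  have e2 : F (restr A1 g) = G (restr A2 f) by apply: (restr_ext U12); rewrite /F /G ?Fg1 ?Fg2 ?Gg1 ?Gg2.
  have e3 : G (restr A2 g) = g by apply: (restr_ext U12); rewrite /G ?Gh1 ?Gh2.
  apply: connect_trans (_ : connect _ f (G (restr A2 f))) _.
    by have := lift_connect HF con1; rewrite e1 e2.
  by have := lift_connect HG con2; rewrite e3.
- move=> p q npq; split.
  + move=> /and3P[_ E1pq E2pq].
    have ln1 := C16 _ _ E1pq.
    have n1 : (val p).1 != (val q).1 by apply: contraNneq ln1 => ->.
    have n2 : (val p).2 != (val q).2 by apply: contraNneq (C26 _ _ E2pq) => ->.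
    case/(C18 _ _ n1): E1pq => f1 [g1 [f1x g1y fg1]].
    case/(C28 _ _ n2): E2pq => f2 [g2 [f2x g2y fg2]].
    case: (exists_diff ln1) => w lw.
    have lw1 : restr T f1 w != restr T g1 w by rewrite (C15 _ _ f1x) (C15 _ _ g1y).
    have lw2 : restr T f2 w != restr T g2 w by rewrite (C25 _ _ f2x) (C25 _ _ g2y) -!labP.
    have [_ w1] := difT lw1; have [_ w2] := difT lw2.
    have d1 : dif f1 g1 = [set w].
      move: fg1; rewrite /col_adj -/(dif f1 g1) => /cards1P[v dv].
      by move: w1; rewrite dv inE => /eqP ->.
    have d2 : dif f2 g2 = [set w].
      move: fg2; rewrite /col_adj -/(dif f2 g2) => /cards1P[v dv].
      by move: w2; rewrite dv inE => /eqP ->.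
    have [Fa1 [Fa2 [_ [_ Fac]]]] := glue_ex f1x f2x (labP p).
    have [Fb1 [Fb2 [_ [_ Fbc]]]] := glue_ex g1y g2y (labP q).
    exists (gl A1 f1 f2), (gl A1 g1 g2); split.
    * by apply/SpP; rewrite Fa1 Fa2.
    * by apply/SpP; rewrite Fb1 Fb2.
    * by rewrite /col_adj -/(dif _ _) (dif_split U12) Fa1 Fa2 Fb1 Fb2 d1 d2 setUid cards1.
  + move=> [f [g [/SpP[fc f1 f2] /SpP[gc g1 g2] fg]]].
    have s1 : dif (restr A1 f) (restr A1 g) \subset dif f g by rewrite [dif f g](dif_split U12) subsetUl.
    have s2 : dif (restr A2 f) (restr A2 g) \subset dif f g by rewrite [dif f g](dif_split U12) subsetUr.
    case: (eqVneq (restr T f) (restr T g)) => [lfg|lfg].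
      have e1 : (val p).1 = (val q).1.
        apply: (cert_one c1 f1 g1); last exact: card_le1 s1 fg.
        by rewrite !restrTT // (TA1 I12).
      have e2 : (val p).2 = (val q).2.
        apply: (cert_one c2 f2 g2); last exact: card_le1 s2 fg.
        by rewrite !restrTT // (TA2 I12).
      by move: npq; rewrite (prod_eq e1 e2) eqxx.
    case: (exists_diff lfg) => w lw.
    have [wT wd] := difT lw.
    have wA1 : w \in A1 by apply: (subsetP (TA1 I12)).
    have wA2 : w \in A2 by apply: (subsetP (TA2 I12)).
    have w1 : w \in dif (restr A1 f) (restr A1 g).
      by move: wd; rewrite !inE !restr_in.
    have w2 : w \in dif (restr A2 f) (restr A2 g).
      by move: wd; rewrite !inE !restr_in.
    have a1 := adj_sub w1 s1 fg; have a2 := adj_sub w2 s2 fg.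
    have n1 : (val p).1 != (val q).1.
      apply: contraNneq lfg => e1.
      by rewrite (restr_restr f1) (restr_restr g1) e1.
    have n2 : (val p).2 != (val q).2.
      apply: contraNneq lfg => e2.
      by rewrite (restr_restr2 f2) (restr_restr2 g2) e2.
    apply/and3P; split => //.
      by apply/(C18 _ _ n1); exists (restr A1 f), (restr A1 g).
    by apply/(C28 _ _ n2); exists (restr A2 f), (restr A2 g).
Qed.

End Prod.

Theorem lemma4 (V : finType) (e : rel V) (T A1 A2 : {set V}) (k : nat)
    (N1 N2 : finType) (E1 : rel N1) (E2 : rel N2)
    (l1 : N1 -> pcol V k) (l2 : N2 -> pcol V k) :
  symmetric e -> irreflexive e -> is_join e T A1 A2 -> 0 < k ->
  is_contraction e E1 l1 T A1 -> is_contraction e E2 l2 T A2 ->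
  is_contraction e
    (prod_edge E1 E2 (lab_match l1 l2 eq_op))
    (prod_lab (lab_match l1 l2 eq_op) l1) T setT /\
  (forall S1 S2,
     certificate e E1 l1 T A1 S1 -> certificate e E2 l2 T A2 S2 ->
     exists S : {p : N1 * N2 | lab_match l1 l2 eq_op p} -> {set pcol V k},
       certificate e (prod_edge E1 E2 (lab_match l1 l2 eq_op))
         (prod_lab (lab_match l1 l2 eq_op) l1) T setT S /\
       (forall (f : pcol V k) (p : {p : N1 * N2 | lab_match l1 l2 eq_op p}),
          is_coloring e setT f ->
          restr A1 f \in S1 (val p).1 -> restr A2 f \in S2 (val p).2 ->
          f \in S p)).
Proof.
move=> _ _ [I12 U12 _ _ Ej] _ [phi1 [i1 c1 s1 E1q l1q]] [phi2 [i2 c2 s2 E2q l2q]].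
have C1 := contr_cert i1 c1 s1 E1q l1q.
have C2 := contr_cert i2 c2 s2 E2q l2q.
split.
  by apply: cert_contr; apply: (prod_cert I12 U12 Ej C1 C2).
move=> S1 S2 d1 d2; exists (@Sp V e k A1 A2 N1 N2 l1 l2 S1 S2); split.
  exact: (prod_cert I12 U12 Ej d1 d2).
by move=> f p fc h1 h2; apply/SpP.
Qed.
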